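(* Let ${\bf a}=(a_1,\ldots,a_r)$ be a tuple of positive integers with $r\geq 2$. Then \[\deg({\bf B}:\mathcal W_{\bf a}\to\mathcal W_{\bf a})=\prod_{j=1}^{r-1}\left(\frac{2a_j}{a_{j+1}+a_{j+2}+\cdots+a_r+1}+1\right).\]
   Context: For finite sets $X,Y$ and $f:X\to Y$, $\deg(f)=\frac{1}{|X|}\sum_{y\in Y}|f^{-1}(y)|^2$. $\mathcal W_{\bf a}$ is the set of all words over the alphabet $\{1,\dots,r\}$ containing exactly $a_i$ copies of the letter $i$ for each $i$. For a word $w=w_1\cdots w_\ell$ and $i\in\{1,\dots,\ell-1\}$, $t_i(w)$ is obtained by swapping $w_i$ and $w_{i+1}$ if $w_i>w_{i+1}$, and $t_i(w)=w$ if $w_i\leq w_{i+1}$. Bubble sort is ${\bf B}(w)=t_{\ell-1}\circ t_{\ell-2}\circ\cdots\circ t_1(w)$, viewed as a map $\mathcal W_{\bf a}\to\mathcal W_{\bf a}$. *)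

(* Defs.v *)
From mathcomp Require Import all_boot all_order all_algebra.
Set Implicit Arguments. Unset Strict Implicit. Unset Printing Implicit Defensive.
Import Order.TTheory GRing.Theory Num.Theory.

(* Words over the alphabet {1,...,r} are represented as sequences of letters
   of type 'I_r, letter (k : 'I_r) standing for k+1 (order preserved). *)

Definition fdeg (T : finType) (X Y : {set T}) (f : T -> T) : rat :=
  ((#|X|%:R)^-1 * \sum_(y in Y) (#|[set x in X | f x == y]|%:R) ^+ 2)%R.

(* t_i, 1-indexed position i: swap w_i and w_{i+1} if w_i > w_{i+1}. *)
Definition tswap (A : eqType) (le : A -> A -> bool) (x0 : A) (i : nat) (w : seq A) : seq A :=
  let a := nth x0 w i.-1 in let b := nth x0 w i in
  if (i.-1 < size w) && (i < size w) && ~~ le a b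
  then set_nth x0 (set_nth x0 w i.-1 b) i a else w.

Definition bubble (A : eqType) (le : A -> A -> bool) (x0 : A) (w : seq A) : seq A :=
  foldl (fun u i => tswap le x0 i u) w (iota 1 (size w).-1).


(* W_a : words of length a_1+...+a_r with exactly a_i copies of letter i.
   a is given as a sequence of size r (a`_k = a_{k+1}). *)
Definition Wa (r : nat) (a : seq nat) : {set (sumn a).-tuple 'I_r} :=
  [set w : (sumn a).-tuple 'I_r | [forall k : 'I_r, count_mem k w == nth 0 a k]].

Lemma size_bubble (A : eqType) le (x0 : A) w : size (bubble le x0 w) = size w.
Proof.
rewrite /bubble; move: (iota _ _) => s0; elim: s0 w => //= i s IH w; rewrite IH /tswap.
case: ifP => // /andP[/andP[h1 h2] _]; rewrite !size_set_nth.
by rewrite (maxn_idPr h1) (maxn_idPr h2).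
Qed.

Lemma bubbleT_proof (r n : nat) (w : n.-tuple 'I_r.+1) :
  size (bubble (fun x y : 'I_r.+1 => (x <= y)%N) ord0 w) == n.
Proof. by rewrite size_bubble size_tuple. Qed.

Definition bubbleT (r n : nat) (w : n.-tuple 'I_r) : n.-tuple 'I_r :=
  match r return n.-tuple 'I_r -> n.-tuple 'I_r with
  | 0 => fun w => w
  | r'.+1 => fun w => @Tuple n _ (bubble (fun x y : 'I_r'.+1 => (x <= y)%N) ord0 w)
                (bubbleT_proof w)
  end w.

(* Main.v *)
Require Import Defs.
From mathcomp Require Import all_boot all_order all_algebra.
From mathcomp Require Import zify ring lra.
Import GRing.Theory Num.Theory.
Set Implicit Arguments. Unset Strict Implicit. Unset Printing Implicit Defensive.

Fixpoint bubc (A : Type) (le : A -> A -> bool) (c : A) (s : seq A) : seq A :=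
  match s with
  | [::] => [:: c]
  | y :: s' => if le c y then c :: bubc le y s' else y :: bubc le c s'
  end.

Definition bub (A : Type) (le : A -> A -> bool) (s : seq A) : seq A :=
  if s is c :: s' then bubc le c s' else [::].

Section BubEq.
Variables (A : eqType) (le : A -> A -> bool) (x0 : A).
Let f := fun u i => tswap le x0 i u.

Lemma tswapS i z u : (0 < i)%N -> tswap le x0 i.+1 (z :: u) = z :: tswap le x0 i u.
Proof. by case: i => // j _; rewrite /tswap /=; case: ifP. Qed.

Lemma foldl_shift len k z u : (0 < k)%N ->
  foldl f (z :: u) (iota k.+1 len) = z :: foldl f u (iota k len).
Proof.
elim: len k z u => //= len IH k z u hk.
rewrite /f tswapS // -/f IH //.
Qed.

Lemma foldl_bubc s c : foldl f (c :: s) (iota 1 (size s)) = bubc le c s.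
Proof.
elim: s c => [//|y s IH] c.
have -> : foldl f [:: c, y & s] (iota 1 (size (y :: s))) =
   foldl f (f [:: c, y & s] 1) (iota 2 (size s)) by [].
have -> : f [:: c, y & s] 1 = if le c y then [:: c, y & s] else [:: y, c & s].
  by rewrite /f /tswap /=; case: (le c y).
rewrite /=; case: (le c y); by rewrite foldl_shift // IH.
Qed.

Lemma bubbleE w : bubble le x0 w = bub le w.
Proof. by case: w => //= c s; rewrite /bubble /= foldl_bubc. Qed.
End BubEq.

Lemma map_bubc n (c : 'I_n) s :
  map val (bubc (fun x y : 'I_n => (x <= y)%N) c s) = bubc leq (val c) (map val s).
Proof. elim: s c => //= y s IH c; case: ifP => _ /=; by rewrite IH. Qed.


Lemma bubc_perm (A : eqType) (le : A -> A -> bool) c s : perm_eq (bubc le c s) (c :: s).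
Proof.
elim: s c => //= y s IH c; case: ifP => _; apply/permP => p /=.
  by rewrite (permP (IH y) p) /=.
by rewrite (permP (IH c) p) /=; lia.
Qed.

Lemma bub_perm (A : eqType) (le : A -> A -> bool) s : perm_eq (bub le s) s.
Proof. by case: s => //= c s; apply: bubc_perm. Qed.

Fixpoint ins (m : nat) (b : seq bool) (v : seq nat) : seq nat :=
  match b with
  | [::] => [::]
  | true :: b' => m :: ins m b' v
  | false :: b' => head 0 v :: ins m b' (behead v)
  end.

Fixpoint gm (b : seq bool) : seq bool :=
  match b with
  | [::] => [::]
  | true :: b' => true :: gm b'
  | false :: b' => rcons b' false
  end.

Lemma perm_ins m b v : size v = count negb b ->
  perm_eq (ins m b v) (nseq (count id b) m ++ v).
Proof.
elim: b v => [|[] b IH] v /=.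
- by case: v.
- by move=> hv; rewrite perm_cons IH.
- case: v => //= y v [hv]; apply/permP => p /=.
  by rewrite (permP (IH _ hv) p) !count_cat /= addnCA.
Qed.

Lemma bub_m m u : all (fun x => m <= x) u -> bub leq (m :: u) = m :: bub leq u.
Proof. by case: u => //= y u /andP[-> _]. Qed.

Lemma bubc_ins m c b u : m < c -> all (fun x => m < x) u -> size u = count negb b ->
  bubc leq c (ins m b u) = ins m (rcons b false) (bubc leq c u).
Proof.
elim: b c u => [|[] b IH] c u hc hu /=.
- by case: u hu.
- move=> hs /=; have -> : (c <= m) = false by lia. by rewrite IH.
- case: u hu => //= y u /andP[hy hu] [hs].
  case: ifP => _ /=; by rewrite IH.
Qed.

Lemma bub_ins m b v : all (fun x => m < x) v -> size v = count negb b ->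
  bub leq (ins m b v) = ins m (gm b) (bub leq v).
Proof.
elim: b v => [|[] b IH] v hv.
- by case: v hv.
- move=> hs; change (bub leq (m :: ins m b v) = m :: ins m (gm b) (bub leq v)).
  rewrite bub_m; first by rewrite IH.
  rewrite (perm_all _ (@perm_ins m b v hs)) all_cat all_nseq leqnn orbT /=.
  by apply: sub_all hv => x /ltnW.
- case: v hv => //= y v /andP[hy hv] [hs].
  by rewrite bubc_ins.
Qed.

Lemma ins_map_filter m s : ins m (map (pred1 m) s) (filter (predC1 m) s) = s.
Proof.
elim: s => //= x s IH; case: eqP => [->|_] /=; by rewrite IH.
Qed.

Lemma map_ins m b v : all (fun x => m < x) v -> size v = count negb b ->
  map (pred1 m) (ins m b v) = b.
Proof.
elim: b v => [|[] b IH] v hv /=.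
- by [].
- by move=> hs; rewrite eqxx IH.
- case: v hv => //= y v /andP[hy hv] [hs].
  by rewrite IH //; case: eqP => // e; rewrite e ltnn in hy.
Qed.

Lemma filter_ins m b v : all (fun x => m < x) v -> size v = count negb b ->
  filter (predC1 m) (ins m b v) = v.
Proof.
elim: b v => [|[] b IH] v hv /=.
- by case: v hv.
- by move=> hs; rewrite eqxx IH.
- case: v hv => //= y v /andP[hy hv] [hs].
  by rewrite IH //; case: eqP => // e; rewrite e ltnn in hy.
Qed.

Lemma ins_inj m b v b' v' : all (fun x => m < x) v -> size v = count negb b ->
  all (fun x => m < x) v' -> size v' = count negb b' ->
  (ins m b v == ins m b' v') = (b == b') && (v == v').
Proof.
move=> h1 h2 h3 h4; apply/eqP/andP => [e|[/eqP -> /eqP ->] //].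
split; apply/eqP.
  by rewrite -(map_ins h1 h2) e (map_ins h3 h4).
by rewrite -(filter_ins h1 h2) e (filter_ins h3 h4).
Qed.

Lemma gm_perm b : perm_eq (gm b) b.
Proof.
elim: b => //= -[] b IH; first by rewrite perm_cons.
by rewrite -cats1 perm_catC.
Qed.


Fixpoint masks (n k : nat) : seq (seq bool) :=
  match n with
  | 0 => if k is 0 then [:: [::]] else [::]
  | n'.+1 => (if k is k'.+1 then [seq true :: b | b <- masks n' k'] else [::])
             ++ [seq false :: b | b <- masks n' k]
  end.

Lemma mem_cons_map (T : eqType) (y z : T) (b : seq T) (r : seq (seq T)) :
  (y :: b \in [seq z :: b0 | b0 <- r]) = (y == z) && (b \in r).
Proof.
apply/mapP/andP => [[b' hb' [-> ->]]|[/eqP -> h]]; first by rewrite eqxx.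
by exists b.
Qed.

Lemma mem_masks n k b : (b \in masks n k) = (size b == n) && (count id b == k).
Proof.
elim: n k b => [|n IH] k b.
  by case: k => [|k]; case: b => [|x b] //=; rewrite in_cons in_nil /= ?orbF //; case: k.
rewrite /= mem_cat; case: b => [|x b].
  apply/negbTE; rewrite negb_or; apply/andP; split.
    by case: k => // k; apply/mapP => -[].
  by apply/mapP => -[].
case: x; case: k => [|k] /=; rewrite ?mem_cons_map /= ?IH ?eqSS //.
- by rewrite add1n /= andbF.
- by rewrite orbF.
Qed.

Lemma uniq_masks n k : uniq (masks n k).
Proof.
elim: n k => [|n IH] [|k] //=.
  by rewrite map_inj_uniq // => x y [].
rewrite cat_uniq !map_inj_uniq ?IH //; try by move=> x y [].
rewrite andbT; apply/hasP => -[x /mapP [y _ ->] /mapP [] //].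
Qed.

Lemma size_masks n k : size (masks n k) = 'C(n, k).
Proof.
elim: n k => [|n IH] [|k] //=; rewrite ?size_cat !size_map !IH //.
  by rewrite !bin0.
by rewrite binS addnC.
Qed.

Fixpoint lead (d : seq bool) : nat := if d is true :: d' then (lead d').+1 else 0.

Fixpoint gd (b : seq bool) : seq bool :=
  match b with
  | [::] => [::]
  | true :: b' => true :: gd b'
  | false :: b' => b'
  end.

Lemma gm_gd b : false \in b -> gm b = rcons (gd b) false.
Proof. by elim: b => [//|[] b IH] //=; rewrite in_cons /= => /IH ->. Qed.

Lemma gd_size b : false \in b -> size (gd b) = (size b).-1.
Proof.
elim: b => [//|[] b IH] //=; rewrite in_cons /= => h; rewrite IH //.
by case: b h {IH}.
Qed.

Lemma gd_count b : false \in b -> count id (gd b) = count id b.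
Proof. by elim: b => [//|[] b IH] //=; rewrite in_cons /= => /IH ->. Qed.

Lemma fiber d :
  count (fun b => gm b == rcons d false) (masks (size d).+1 (count id d)) = (lead d).+1.
Proof.
elim: d => [//|[] d IH].
- have -> : masks (size (true :: d)).+1 (count id (true :: d)) =
     [seq true :: b | b <- masks (size d).+1 (count id d)] ++
     [seq false :: b | b <- masks (size d).+1 (count id d).+1] by [].
  rewrite count_cat !count_map.
  rewrite (eq_count (a2 := fun b => gm b == rcons d false)); last first.
    by move=> b /=; rewrite eqseq_cons eqxx.
  rewrite IH (eq_count (a2 := pred1 (true :: d))); last first.
    by move=> b /=; rewrite -rcons_cons eqseq_rcons eqxx andbT.
  rewrite count_uniq_mem ?uniq_masks // mem_masks /= eqxx add1n eqxx.
  by rewrite addn1.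
- have -> : masks (size (false :: d)).+1 (count id (false :: d)) =
     (if count id d is k.+1 then [seq true :: b | b <- masks (size d).+1 k] else [::]) ++
     [seq false :: b | b <- masks (size d).+1 (count id d)] by [].
  rewrite count_cat !count_map.
  rewrite (eq_count (a1 := preim _ _) (a2 := pred1 (false :: d))); last first.
    by move=> b /=; rewrite -rcons_cons eqseq_rcons eqxx andbT.
  rewrite count_uniq_mem ?uniq_masks // mem_masks /= !eqxx /=.
  case: (count id d) => [|k] //. rewrite addn1 count_map (eq_count (a2 := pred0)) ?count_pred0 //.
Qed.

Lemma sum_pick (U : eqType) (Y : seq U) (z : U) (h : U -> nat) :
  uniq Y -> z \in Y -> \sum_(y <- Y) (z == y) * h y = h z.
Proof.
move=> uY zY; rewrite (big_rem z) //= eqxx mul1n big_seq big1 ?addn0 //.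
move=> y hy; case: eqP => [e|]; last by rewrite mul0n.
by rewrite -e mem_rem_uniqF in hy.
Qed.

Lemma sum_fibers (T U : eqType) (X : seq T) (Y : seq U) (g : T -> U) :
  uniq Y -> {in X, forall x, g x \in Y} ->
  \sum_(x <- X) \sum_(x' <- X) (g x == g x' : nat) =
  \sum_(y <- Y) (count (fun x => g x == y) X) ^ 2.
Proof.
move=> uY gY.
under [RHS]eq_bigr => y _ do rewrite -!sum1_count !big_mkcond /= expnS expn1 big_distrl /=.
under [RHS]eq_bigr => y _ do under eq_bigr => x _ do rewrite big_distrr /=.
rewrite [RHS]exchange_big /= big_seq_cond [RHS]big_seq_cond /=.
apply: eq_bigr => x /andP[hx _].
rewrite [RHS]exchange_big /=; apply: eq_bigr => x' _.
rewrite eq_sym -(sum_pick (fun y => (g x' == y : nat)) uY (gY x hx)).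
by apply: eq_bigr => y _; case: (g x == y); case: (g x' == y).
Qed.

Definition Qc n k := \sum_(b <- masks n k) \sum_(b' <- masks n k) (gm b == gm b' : nat).

Lemma Qc_fib k M : Qc (k + M).+1 k = \sum_(d <- masks (k + M) k) ((lead d).+1) ^ 2.
Proof.
rewrite /Qc (sum_fibers (Y := [seq rcons d false | d <- masks (k + M) k])).
- rewrite big_map big_seq [RHS]big_seq; apply: eq_bigr => d.
  rewrite mem_masks => /andP[/eqP <- /eqP <-]; by rewrite fiber.
- by rewrite map_inj_uniq ?uniq_masks // => x y /rcons_inj [].
- move=> b; rewrite mem_masks => /andP[/eqP hs /eqP hc].
  have hf : false \in b.
    case hf : (false \in b) => //.
    have : all id b by apply/allP => -[] // h; rewrite h in hf.
    rewrite all_count hs hc => /eqP; lia.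
  rewrite gm_gd //; apply/mapP; exists (gd b) => //.
  by rewrite mem_masks gd_size // gd_count // hs hc /= !eqxx.
Qed.

Lemma masks_n0 n : masks n 0 = [:: nseq n false].
Proof. by elim: n => //= n ->. Qed.

Lemma masks_small n k : n < k -> masks n k = [::].
Proof. by move=> h; apply/eqP; rewrite -size_eq0 size_masks bin_small. Qed.

Lemma masks_nn n : masks n n = [:: nseq n true].
Proof. by elim: n => //= n ->; rewrite masks_small. Qed.

Lemma Qc_nn n : Qc n n = 1.
Proof. by rewrite /Qc masks_nn !big_seq1 eqxx. Qed.

Lemma masksS n k : masks n.+1 k.+1 =
  [seq true :: b | b <- masks n k] ++ [seq false :: b | b <- masks n k.+1].
Proof. by []. Qed.

Lemma T1_eq k M : \sum_(d <- masks (k + M) k) (lead d).+1 = 'C((k + M).+1, k).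
Proof.
elim: k => [|k IH].
  by rewrite add0n masks_n0 big_seq1 bin0; case: M.
rewrite addSn masksS big_cat !big_map /=.
under eq_bigr => d _ do rewrite -addn1.
rewrite big_split /= IH sum1_size size_masks.
have -> : \sum_(i <- masks (k + M) k.+1) 1 = 'C(k + M, k.+1).
  by rewrite sum1_size size_masks.
rewrite [in RHS]binS [in RHS]binS; lia.
Qed.

Lemma S_eq k M : (\sum_(d <- masks (k + M) k) ((lead d).+1) ^ 2) * M.+2 =
  (2 * k + M.+2) * 'C((k + M).+1, k).
Proof.
elim: k => [|k IH].
  by rewrite add0n masks_n0 big_seq1 bin0 muln1; case: M => //= n; lia.
rewrite addSn masksS big_cat !big_map /=.
have -> : \sum_(i <- masks (k + M) k.+1) (lead (false :: i)).+1 ^ 2 = 'C(k + M, k.+1).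
  by rewrite -(size_masks (k + M)) -sum1_size; apply: eq_bigr.
have E : forall d, (lead (true :: d)).+1 ^ 2 = (lead d).+1 ^ 2 + 2 * (lead d).+1 + 1.
  by move=> d /=; rewrite !expnS ?expn0; nia.
under eq_bigr => d _ do rewrite E.
rewrite !big_split /= -big_distrr /= T1_eq sum1_size size_masks.
have hb := mul_bin_left (k + M).+1 k.
have e1 := binS (k + M) k.
have e2 := binS (k + M).+1 k.
move: IH hb e1 e2.
set S := \sum_(_ <- _) _.
set B0 := 'C((k + M).+1, k).
set B1 := 'C((k + M).+1, k.+1).
set B2 := 'C((k + M).+2, k.+1).
set c1 := 'C(k + M, k).
set c2 := 'C(k + M, k.+1).
have -> : (k + M).+1 - k = M.+1 by lia.
move=> *; nia.
Qed.


Fixpoint Words (m : nat) (a : seq nat) : seq (seq nat) :=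
  match a with
  | [::] => [:: [::]]
  | k :: a' => [seq ins m b v | b <- masks (k + sumn a') k, v <- Words m.+1 a']
  end.

Definition inWP m a (s : seq nat) :=
  [/\ size s = sumn a, all (fun x => m <= x < m + size a) s &
      forall j, j < size a -> count_mem (m + j) s = nth 0 a j].

Lemma mem_Words m a s : s \in Words m a <-> inWP m a s.
Proof.
elim: a m s => [|k a IH] m s /=.
  rewrite in_cons in_nil orbF; split.
    by move/eqP ->; split.
  by case=> /eqP; rewrite size_eq0 => /eqP ->.
split.
- case/allpairsP => -[b v] /= [hb /IH [hv1 hv2 hv3] ->].
  move: hb; rewrite mem_masks => /andP[/eqP hb1 /eqP hb2].
  have hsv : size v = count negb b.
    have := count_predC id b; rewrite hb1 hb2 hv1 => h.
    by rewrite (eq_count (a2 := predC id)) //; lia.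
  have hp := perm_ins m hsv.
  split.
  + by rewrite (perm_size hp) size_cat size_nseq hb2 hv1.
  + rewrite (perm_all _ hp) all_cat all_nseq; apply/andP; split.
      by apply/orP; right; rewrite /=; apply/andP; split; lia.
    by apply: sub_all hv2 => x /andP[h1 h2]; rewrite /=; apply/andP; split; lia.
  + move=> [|j] hj.
      rewrite (permP hp) count_cat count_nseq /= addn0 eqxx mul1n hb2.
      have -> : count_mem m v = 0.
        by apply/count_memPn/negP => /(allP hv2) /=; lia.
      by rewrite addn0.
    rewrite (permP hp) count_cat count_nseq /=.
    have -> : (m == m + j.+1) = false by lia.
    by rewrite mul0n add0n -hv3 // addnS addSn.
- case=> h1 h2 h3.
  apply/allpairsP; exists (map (pred1 m) s, filter (predC1 m) s); split => /=.
  + rewrite mem_masks size_map h1 eqxx /= count_map.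
    by have := h3 0 isT; rewrite addn0 /= => ->.
  + apply/IH; split.
    * rewrite size_filter.
      have := count_predC (pred1 m) s; have := h3 0 isT; rewrite addn0 /= => -> .
      rewrite h1 /= => /eqP; rewrite eqn_add2l => /eqP <-. by [].
    * apply/allP => x; rewrite mem_filter => /andP[hx xs].
      by move/allP: h2 => /(_ x xs) /=; move: hx => /= /eqP; lia.
    * move=> j hj; rewrite count_filter.
      rewrite (eq_count (a2 := pred1 (m + j.+1))).
        by rewrite h3.
      by move=> x /=; rewrite addSn -addnS; case: eqP => [->|] //=; apply/negP => /eqP; lia.
  + by rewrite ins_map_filter.
Qed.

Lemma Words_prop m k a b v : b \in masks (k + sumn a) k -> v \in Words m.+1 a ->
  all (fun x => m < x) v /\ size v = count negb b.
Proof.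
rewrite mem_masks => /andP[/eqP hb1 /eqP hb2] /mem_Words [hv1 hv2 _]; split.
  by apply: sub_all hv2 => x /andP[].
have := count_predC id b; rewrite hb1 hb2 hv1 => h.
by rewrite (eq_count (a2 := predC id)) //; lia.
Qed.

Lemma uniq_Words m a : uniq (Words m a).
Proof.
elim: a m => [|k a IH] m //=.
apply: allpairs_uniq => //; first exact: uniq_masks.
move=> [b v] [b' v'] /allpairsP [[b1 v1] /= [h1 h2 [-> ->]]] /allpairsP [[b2 v2] /= [h3 h4 [-> ->]]] /= e.
have [p1 p2] := Words_prop h1 h2.
have [p3 p4] := Words_prop h3 h4.
by move/eqP: e; rewrite ins_inj // => /andP[/eqP -> /eqP ->].
Qed.

Lemma size_Words_cons m k a :
  size (Words m (k :: a)) = 'C(k + sumn a, k) * size (Words m.+1 a).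
Proof. by rewrite /= size_allpairs size_masks. Qed.

Lemma Words_pos m a : 0 < size (Words m a).
Proof.
elim: a m => [|k a IH] m //.
by rewrite size_Words_cons muln_gt0 bin_gt0 leq_addr IH.
Qed.

Definition Pc m a := \sum_(s <- Words m a) \sum_(t <- Words m a) (bub leq s == bub leq t : nat).

Lemma sum4 (I J : Type) (r1 : seq I) (r2 : seq J) (X : I -> I -> nat) (Y : J -> J -> nat) :
  \sum_(b <- r1) \sum_(v <- r2) \sum_(b' <- r1) \sum_(v' <- r2) X b b' * Y v v' =
  (\sum_(b <- r1) \sum_(b' <- r1) X b b') * (\sum_(v <- r2) \sum_(v' <- r2) Y v v').
Proof.
rewrite big_distrl; apply: eq_bigr => b _ /=.
rewrite big_distrl exchange_big /=; apply: eq_bigr => b' _ /=.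
rewrite big_distrr /=; apply: eq_bigr => v _ /=.
by rewrite big_distrr.
Qed.

Lemma Pc_cons m k a : Pc m (k :: a) = Qc (k + sumn a) k * Pc m.+1 a.
Proof.
rewrite /Pc /Qc /= big_allpairs_dep -sum4.
apply: eq_big_seq => b hb; apply: eq_big_seq => v hv.
rewrite big_allpairs_dep.
apply: eq_big_seq => b' hb'; apply: eq_big_seq => v' hv'.
have [p1 p2] := Words_prop hb hv.
have [p3 p4] := Words_prop hb' hv'.
rewrite !bub_ins // ins_inj.
- by case: (gm b == gm b'); case: (bub leq v == bub leq v').
- by rewrite (perm_all _ (bub_perm _ _)).
- by rewrite (perm_size (bub_perm _ _)) p2 (permP (gm_perm b)).
- by rewrite (perm_all _ (bub_perm _ _)).
- by rewrite (perm_size (bub_perm _ _)) p4 (permP (gm_perm b')).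
Qed.

Local Open Scope ring_scope.

Lemma Qc_rat k N : (0 < N)%N ->
  ((Qc (k + N) k)%:R : rat) = ('C(k + N, k))%:R * (2 * k%:R / (N.+1)%:R + 1).
Proof.
case: N => // M _.
have h := S_eq k M; rewrite -Qc_fib -addnS in h.
have hM : (M.+2%:R : rat) != 0 by rewrite pnatr_eq0.
apply: (mulIf hM); rewrite -(natrM _ (Qc _ _) M.+2) h natrM natrD natrM.
field. apply/negP => /eqP; have := ler0n rat M; lra.
Qed.

Lemma Pc_nil m : Pc m [::] = 1.
Proof. by rewrite /Pc /= !big_seq1 eqxx. Qed.

Lemma Pc_formula a m : all (fun x => 0 < x)%N a -> (0 < size a)%N ->
  ((Pc m a)%:R : rat) = (size (Words m a))%:R *
    \prod_(0 <= j < (size a).-1)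
      ((2 * (nth 0%N a j)%:R) / ((sumn (drop j.+1 a)).+1%:R) + 1).
Proof.
elim: a m => [//|k a IH] m /= /andP[hk ha] _.
rewrite Pc_cons size_Words_cons.
case: a IH ha => [|y a] IH ha.
  by rewrite /= addn0 Qc_nn Pc_nil big_geq // binn mulr1.
rewrite [size (y :: a)]/= big_nat_recl //.
rewrite natrM Qc_rat; last by move: ha => /= /andP[hy _]; lia.
rewrite (IH m.+1) // natrM.
rewrite drop0 /=.
ring.
Qed.

Lemma sum_nth_drop a i : (\sum_(i <= k < size a) nth 0 a k = sumn (drop i a))%N.
Proof.
elim: a i => [|x a IH] i.
  by rewrite big_geq.
case: i => [|i].
  rewrite [size _]/= big_nat_recl // drop0 /=.
  by have := IH 0; rewrite drop0 => <-.
by rewrite [size _]/= big_add1 /= -IH.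
Qed.

Local Open Scope ring_scope.

Lemma card_fiber (T : finType) (X : {set T}) (P : pred T) :
  #|[set x in X | P x]| = count P (enum X).
Proof.
rewrite -sum1_card -sum1_count big_enum_cond.
by apply: eq_bigl => x; rewrite !inE.
Qed.

Lemma fdeg_pairs (T : finType) (X : {set T}) (f : T -> T) :
  {in X, forall x, f x \in X} ->
  fdeg X X f = (#|X|%:R)^-1 * ((\sum_(x <- enum X) \sum_(x' <- enum X) (f x == f x' : nat))%N)%:R.
Proof.
move=> fX; rewrite /fdeg; congr (_ * _).
rewrite (sum_fibers (Y := enum X)) ?enum_uniq; last by move=> x; rewrite !mem_enum; apply: fX.
rewrite natr_sum big_enum /=; apply: eq_bigr => y _.
  by rewrite card_fiber natrX.
by [].
Qed.

Definition tv (r n : nat) (x : n.-tuple 'I_r) : seq nat := map val (val x).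

Lemma tv_inj r n : injective (@tv r n).
Proof. by move=> x y /inj_map h; apply: val_inj; apply: h; apply: val_inj. Qed.

Lemma tv_bubble r n (x : n.-tuple 'I_r.+1) : tv (bubbleT x) = bub leq (tv x).
Proof.
rewrite /tv /bubbleT /= bubbleE.
by case: x => -[|c s] //= _; rewrite map_bubc.
Qed.

Lemma memX r a (x : (sumn a).-tuple 'I_r) : size a = r ->
  (x \in Wa r a) <-> inWP 0 a (tv x).
Proof.
move=> hs; rewrite inE; split.
- move/forallP => h; split.
  + by rewrite /tv size_map size_tuple.
  + by apply/allP => y /mapP [z _ ->]; rewrite add0n hs ltn_ord.
  + move=> j hj; rewrite hs in hj; have := h (Ordinal hj) => /eqP <-.
    rewrite /tv count_map add0n; apply: eq_count => z /=.
    by apply/eqP/eqP => [e|-> //]; apply: val_inj.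
- case=> _ _ h; apply/forallP => k; apply/eqP.
  rewrite -h; last by rewrite hs ltn_ord.
  rewrite /tv count_map add0n; apply: eq_count => z /=.
  by apply/eqP/eqP => [->|e] //; apply: val_inj.
Qed.

Lemma perm_X r a : size a = r.+1 ->
  perm_eq (map (@tv r.+1 (sumn a)) (enum (Wa r.+1 a))) (Words 0 a).
Proof.
move=> hs; apply: uniq_perm.
- by rewrite map_inj_uniq ?enum_uniq //; apply: tv_inj.
- exact: uniq_Words.
move=> s; apply/idP/idP.
- by case/mapP => x; rewrite mem_enum => /(memX _ hs) h ->; apply/mem_Words.
- move/mem_Words => h; have [h1 h2 h3] := h.
  have hw : size (map (@inord r) s) == sumn a by rewrite size_map h1.
  have e : tv (Tuple hw) = s.
    rewrite /tv /= -map_comp -[RHS]map_id; apply/eq_in_map => y hy /=.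
    by rewrite inordK //; move/allP: h2 => /(_ y hy); rewrite add0n hs.
  apply/mapP; exists (Tuple hw) => //.
  by rewrite mem_enum; apply/(memX _ hs); rewrite e.
Qed.

Unset Implicit Arguments.
Theorem mainTheorem9 (r : nat) (a : seq nat) :
  (2 <= r)%N -> size a = r -> all (fun x => 0 < x)%N a ->
  fdeg (Wa r a) (Wa r a) (@bubbleT r (sumn a)) =
  \prod_(0 <= j < r.-1)
     ((2 * (nth 0%N a j)%:R) / ((\sum_(j.+1 <= k < r) nth 0%N a k)%N.+1%:R) + 1 : rat).
Proof.
case: r => [//|r] _ hs hpos.
have hP := perm_X hs.
rewrite fdeg_pairs; last first.
  move=> x /(memX _ hs) hx; apply/(memX _ hs).
  have hp := bub_perm leq (tv x).
  rewrite tv_bubble; case: hx => h1 h2 h3; split.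
  + by rewrite (perm_size hp).
  + by rewrite (perm_all _ hp).
  + by move=> j hj; rewrite (permP hp) h3.
have -> : (\sum_(x <- enum (Wa r.+1 a)) \sum_(x' <- enum (Wa r.+1 a))
     (bubbleT x == bubbleT x' : nat))%N = Pc 0 a.
  rewrite /Pc -(perm_big _ hP) big_map; apply: eq_bigr => x _.
  rewrite -(perm_big _ hP) big_map; apply: eq_bigr => x' _.
  by rewrite -!tv_bubble (inj_eq (@tv_inj _ _)).
rewrite Pc_formula //; last by rewrite hs.
have hc : #|Wa r.+1 a| = size (Words 0 a).
  by rewrite -(perm_size hP) size_map cardE.
rewrite -hc mulrA mulVf ?mul1r; last first.
  by rewrite pnatr_eq0 hc -lt0n Words_pos.
rewrite hs /=; apply: eq_bigr => j _.
by rewrite -hs sum_nth_drop.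
Qed.
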